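(* Let $(X,M,N)$ be a localizable enhanced measurable space. Composition with the quotient map $M\to M/N$ is a bijection from the set of (complex) continuous valuations on the Boolean algebra $M/N$ onto the set of finite essential measures on $(X,M,N)$.
   Context: Enhanced measurable space: $(X,M,N)$ with $M$ a $\sigma$-algebra on $X$ and $N\subset M$ closed under arbitrary subsets and countable unions; localizable if $M/N$ is complete and $1$ is the supremum of all $a\in M/N$ such that $\{b\le a\}$ admits a faithful $[0,\infty)$-valued continuous valuation. A complex valuation on a lattice $L$ is $\nu:L\to\mathbb{C}$ with $\nu(0)=0$, $\nu(x)+\nu(y)=\nu(x\vee y)+\nu(x\wedge y)$; continuous if $\nu(\sup I)=\lim_{x\in I}\nu(x)$ for directed $I$. A finite measure is a countably additive map $\mu:M\to\mathbb{C}$ vanishing on $N$; $\mu|_m$ is its restriction to measurable subsets of $m$. $m\in M$ is $\sigma$-finite if the induced space on $m$ admits a finite measure $\nu$ with $\nu|_{m''}=0\Rightarrow m''\in N$. A finite measure $\mu$ is essential if for every $m\in M$ with $\mu|_m\neq0$ there is a $\sigma$-finite $m'\in M$, $m'\subset m$, with $\mu|_{m'}\ne0$. *)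

(* Defs.v *)
From mathcomp Require Import all_boot all_order all_algebra.
From mathcomp Require Import boolp classical_sets reals measurable_structure.
From mathcomp Require Import complex.
Set Implicit Arguments. Unset Strict Implicit. Unset Printing Implicit Defensive.
Import Order.TTheory GRing.Theory Num.Theory.
Local Open Scope classical_set_scope.
Local Open Scope ring_scope.

Section EMS.
Context {X : Type}.

Definition enhanced (M N : set (set X)) : Prop :=
  [/\ sigma_algebra setT M,
      N `<=` M,
      (forall n s, N n -> s `<=` n -> N s),
      N set0 &
      (forall F : nat -> set X, (forall k, N (F k)) -> N (\bigcup_k F k))].

Definition Msub (M : set (set X)) := {A : set X | M A}.

Definition symdiff (A B : set X) : set X := (A `\` B) `|` (B `\` A).

Definition cls (M N : set (set X)) (m : set X) : set (set X) :=
  [set m' | M m' /\ N (symdiff m m')].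

Definition MN (M N : set (set X)) :=
  {C : set (set X) | exists m, M m /\ C = cls M N m}.

Definition qmap (M N : set (set X)) (m : Msub M) : MN M N :=
  exist _ (cls M N (proj1_sig m)) (ex_intro _ (proj1_sig m) (conj (proj2_sig m) erefl)).

Definition mnle (M N : set (set X)) (a b : MN M N) : Prop :=
  exists ma mb, proj1_sig a ma /\ proj1_sig b mb /\ N (ma `\` mb).

Section Lattice.
Variables (M N : set (set X)).
Local Notation L := (MN M N).
Local Notation le := (@mnle M N).

Definition is_lub (x y j : L) := [/\ le x j, le y j & forall z, le x z -> le y z -> le j z].
Definition is_glb (x y m : L) := [/\ le m x, le m y & forall z, le z x -> le z y -> le z m].
Definition is_sup (S : set L) (s : L) :=
  (forall x, S x -> le x s) /\ (forall z, (forall x, S x -> le x z) -> le s z).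
Definition is_bot (z : L) := forall a, le z a.
Definition is_top (t : L) := forall a, le a t.
Definition directed (S : set L) :=
  (exists x, S x) /\ forall x y, S x -> S y -> exists z, [/\ S z, le x z & le y z].
Definition downset (a : L) : set L := [set b | le b a].

Definition net_cvg {K : numFieldType} (I : set L) (f : L -> K) (l : K) :=
  forall e : K, 0 < e -> exists x0, I x0 /\
    forall x, I x -> le x0 x -> `|f x - l| < e.

(** f is a valuation on the sublattice D (D is a down-set or all of L). *)
Definition valuation_on {K : numFieldType} (D : set L) (f : L -> K) :=
  (forall z, is_bot z -> f z = 0) /\
  (forall x y j m, D x -> D y -> is_lub x y j -> is_glb x y m ->
     f x + f y = f j + f m).

Definition continuous_on {K : numFieldType} (D : set L) (f : L -> K) :=
  forall (I : set L) s, I `<=` D -> directed I -> is_sup I s -> net_cvg I f (f s).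

Definition continuous_valuation {K : numFieldType} (f : L -> K) :=
  valuation_on setT f /\ continuous_on setT f.

End Lattice.

Definition localizable (R : realType) (M N : set (set X)) : Prop :=
  [/\ enhanced M N,
      (forall S : set (MN M N), exists s, is_sup S s) &
      (forall t, is_top t ->
        is_sup [set a : MN M N | exists f : MN M N -> R,
                  [/\ (forall b, mnle b a -> 0 <= f b),
                      valuation_on (downset a) f,
                      continuous_on (downset a) f &
                      (forall b, mnle b a -> f b = 0 -> is_bot b)]] t)].
End EMS.

Definition finite_measure {X : Type} {K : numFieldType} (M N : set (set X))
    (mu : Msub M -> K) : Prop :=
  (forall m : Msub M, N (proj1_sig m) -> mu m = 0) /\
  (forall (A : nat -> Msub M) (U : Msub M),
     (forall i j, i != j -> proj1_sig (A i) `&` proj1_sig (A j) = set0) ->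
     proj1_sig U = \bigcup_n proj1_sig (A n) ->
     forall e : K, 0 < e -> exists n0, forall n, (n0 <= n)%N ->
       `|\sum_(i < n) mu (A i) - mu U| < e).

Definition sub_type {X : Type} (m : set X) := {x : X | m x}.
Definition induced_M {X : Type} (M : set (set X)) (m : set X) : set (set (sub_type m)) :=
  [set A | M ((@proj1_sig X m) @` A)].
Definition induced_N {X : Type} (N : set (set X)) (m : set X) : set (set (sub_type m)) :=
  [set A | N ((@proj1_sig X m) @` A)].

Arguments induced_M {X} M m.
Arguments finite_measure {X K} M N mu.
Arguments qmap {X} M N m.
Arguments cls {X} M N m.
Arguments induced_N {X} N m.

Definition restr_zero {X : Type} {K : numFieldType} (M : set (set X))
    (mu : Msub M -> K) (m : set X) : Prop :=
  forall a : Msub M, proj1_sig a `<=` m -> mu a = 0.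

Definition sigma_finite_set {X : Type} (R : realType) (M N : set (set X)) (m : set X) : Prop :=
  exists nu : Msub (induced_M M m) -> R[i],
    finite_measure (induced_M M m) (induced_N N m) nu /\
    forall m'' : Msub (induced_M M m),
      restr_zero nu (proj1_sig m'') -> induced_N N m (proj1_sig m'').

Definition essential {X : Type} (R : realType) (M N : set (set X)) (mu : Msub M -> R[i]) : Prop :=
  forall m : Msub M, ~ restr_zero mu (proj1_sig m) ->
    exists m' : Msub M, [/\ proj1_sig m' `<=` proj1_sig m,
       sigma_finite_set R M N (proj1_sig m') & ~ restr_zero mu (proj1_sig m')].

Arguments essential {X} R M N mu.
Arguments sigma_finite_set {X} R M N m.
Arguments localizable {X} R M N.

(* Main.v *)
Require Import Defs.
From HB Require Import structures.
From mathcomp Require Import all_boot all_order all_algebra.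
From mathcomp Require Import boolp classical_sets reals measurable_structure complex.
From mathcomp Require Import ereal topology normedtype sequences measure charge.
From mathcomp Require Import lra ring.
Set Implicit Arguments. Unset Strict Implicit. Unset Printing Implicit Defensive.
Import Order.TTheory GRing.Theory Num.Theory.
Import numFieldNormedType.Exports.
Local Open Scope classical_set_scope.
Local Open Scope ring_scope.
Local Open Scope complex_scope.

Ltac ssolve := let t := fresh "t" in move=> t;
  rewrite /symdiff /=; apply: contrapT; tauto.
Ltac seqsolve := apply/seteqP; split; ssolve.
Definition XM (X : Type) (x0 : X) (M : set (set X)) (HM : sigma_algebra setT M) : Type := X.

Section HahnSec.
Variables (X : Type) (x0 : X) (M : set (set X)) (HM : sigma_algebra setT M).
Local Notation T := (XM x0 HM).
HB.instance Definition _ := gen_eqMixin T.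
HB.instance Definition _ := gen_choiceMixin T.
HB.instance Definition _ := isPointed.Build T x0.

Let m0 : M set0. Proof. by case: HM. Qed.
Let mC : forall A, M A -> M (~` A).
Proof. by case: HM => _ h _ A /h; rewrite setTD. Qed.
Let mU : forall F : (set T)^nat, (forall i, M (F i)) -> M (\bigcup_i F i).
Proof. by case: HM. Qed.

HB.instance Definition _ := @isMeasurable.Build default_measure_display T M m0 mC mU.

Variables (R : realType) (f : set X -> R).
Hypothesis f0 : f set0 = 0.
Hypothesis fca : forall F : nat -> set X, (forall i, M (F i)) ->
  (forall i j, i != j -> F i `&` F j = set0) ->
  forall e : R, 0 < e -> exists n0, forall n, (n0 <= n)%N ->
    `|\sum_(i < n) f (F i) - f (\bigcup_n F n)| < e.

Definition cf : set T -> \bar R := fun A => ((f A)%:E)%E.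

Let cf0 : cf set0 = 0%E. Proof. by rewrite /cf f0. Qed.
Let cffin : forall A, measurable A -> cf A \is a fin_num. Proof. by []. Qed.
Let cfsa : semi_sigma_additive cf.
Proof.
move=> F mF tF mUF.
rewrite /cf.
under eq_fun do rewrite sumEFin.
apply: cvg_EFin; first by near=> n.
apply/cvgrPdist_lt => e e0 /=.
have dis : forall i j, i != j -> F i `&` F j = set0.
  move=> i j ij; apply/eqP/negPn/negP => /set0P ne.
  by move: ij; rewrite (tF i j) // eqxx.
have [n0 Hn0] := fca mF dis e0.
exists n0 => // n /= hn; rewrite distrC big_mkord; exact: Hn0.
Unshelve. all: by end_near.
Qed.

HB.instance Definition _ := isCharge.Build _ T R cf cf0 cffin cfsa.

Lemma hahn_aux : exists P, M P /\ (forall c, M c -> c `<=` P -> 0 <= f c) /\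
   (forall c, M c -> c `<=` ~` P -> f c <= 0).
Proof.
have [P [N0 [[mP posP] [mN negN] PN PN0]]] := Hahn_decomposition cf.
exists P; split => //; split.
  by move=> c mc cP; have := posP c mc cP; rewrite /cf lee_fin.
move=> c mc cP; have := negN c mc.
rewrite /cf lee_fin; apply => x /cP Px.
have : (P `|` N0) x by rewrite PN.
by case.
Qed.
End HahnSec.
Section Cx.
Variable R : realType.
Lemma sq_le_ReIm (a b : R) : `|a| <= Num.sqrt (a ^+ 2 + b ^+ 2).
Proof. by rewrite -sqrtr_sqr ler_sqrt ?addr_ge0 ?sqr_ge0 // lerDl sqr_ge0. Qed.
Lemma norm_Re (z : R[i]) : (`|complex.Re z|)%:C <= `|z|.
Proof. by rewrite normc_def lecR sq_le_ReIm. Qed.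
Lemma norm_Im (z : R[i]) : (`|complex.Im z|)%:C <= `|z|.
Proof. by rewrite normc_def lecR addrC sq_le_ReIm. Qed.
Lemma norm_le_ReIm (z : R[i]) : `|z| <= (`|complex.Re z| + `|complex.Im z|)%:C.
Proof.
rewrite normc_def lecR.
set a := complex.Re z; set b := complex.Im z.
have h0 : 0 <= `|a| + `|b| by rewrite addr_ge0.
rewrite -(ger0_norm h0) -sqrtr_sqr ler_sqrt ?sqr_ge0 //.
rewrite -(real_normK (num_real a)) -(real_normK (num_real b)).
have ha : 0 <= `|a| by []. have hb : 0 <= `|b| by [].
nra.
Qed.
Lemma norm_realC (x : R) : `|x%:C| = (`|x|)%:C.
Proof. by rewrite normc_def /= expr0n /= addr0 sqrtr_sqr. Qed.
Lemma posC (e : R[i]) : 0 < e -> e = (complex.Re e)%:C /\ 0 < complex.Re e.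
Proof.
rewrite ltcE => /andP[/eqP h1 h2]; split => //.
by case: e h1 h2 => a b /= -> _.
Qed.
End Cx.

Definition gext {Y : Type} (M' : set (set Y)) {K : numFieldType} (mu : Msub M' -> K) (A : set Y) : K :=
  match pselect (M' A) with left p => mu (exist _ A p) | right _ => 0 end.

Lemma gext_E {Y : Type} (M' : set (set Y)) {K : numFieldType} (mu : Msub M' -> K) A (p : M' A) :
  gext mu A = mu (exist _ A p).
Proof.
rewrite /gext; case: pselect => [q|//]; congr mu; congr exist.
exact: Prop_irrelevance.
Qed.

Lemma sub_val_inj {Y : Type} (G : set Y) (u v : Defs.sub_type G) : proj1_sig u = proj1_sig v -> u = v.
Proof.
case: u => u pu; case: v => v pv /= e; subst v.
by congr exist; apply: Prop_irrelevance.
Qed.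
Section Main.
Variables (X : Type) (M N : set (set X)).
Hypothesis HE : enhanced M N.
Local Notation L := (MN M N).
Local Notation le := (@mnle X M N).
Implicit Types (A B C D : set X) (x y z : L).

Lemma HMs : sigma_algebra setT M. Proof. by case: HE. Qed.
Lemma M0 : M set0. Proof. by case: HMs. Qed.
Lemma MC A : M A -> M (~` A).
Proof. by case: HMs => _ h _ /h; rewrite setTD. Qed.
Lemma MU (F : nat -> set X) : (forall i, M (F i)) -> M (\bigcup_i F i).
Proof. by case: HMs => _ _ h; apply: h. Qed.
Lemma MT : M setT. Proof. by rewrite -setC0; apply: MC; apply: M0. Qed.
Lemma MU2 A B : M A -> M B -> M (A `|` B).
Proof.
move=> hA hB; rewrite -bigcup2E; apply: MU => -[//|[//|i]]; exact: M0.
Qed.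
Lemma MI A B : M A -> M B -> M (A `&` B).
Proof.
move=> hA hB; have -> : A `&` B = ~` (~` A `|` ~` B) by seqsolve.
by apply/MC/MU2; apply: MC.
Qed.
Lemma MD A B : M A -> M B -> M (A `\` B).
Proof. by move=> hA hB; rewrite setDE; apply: MI => //; apply: MC. Qed.

Lemma NM A : N A -> M A. Proof. by case: HE => _ h _ _ _; apply: h. Qed.
Lemma Nsub A B : N B -> A `<=` B -> N A.
Proof. by case: HE => _ _ h _ _; apply: h. Qed.
Lemma N0 : N set0. Proof. by case: HE. Qed.
Lemma NU (F : nat -> set X) : (forall i, N (F i)) -> N (\bigcup_i F i).
Proof. by case: HE => _ _ _ _ h; apply: h. Qed.
Lemma NU2 A B : N A -> N B -> N (A `|` B).
Proof.
move=> hA hB; rewrite -bigcup2E; apply: NU => -[//|[//|i]]; exact: N0.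
Qed.
Lemma Nsub2 A B C : N B -> N C -> A `<=` B `|` C -> N A.
Proof. by move=> hB hC; apply: Nsub; apply: NU2. Qed.
Lemma Nsub3 A B C D : N B -> N C -> N D -> A `<=` B `|` C `|` D -> N A.
Proof. by move=> hB hC hD; apply: Nsub; apply: NU2 => //; apply: NU2. Qed.

Definition rep (x : L) : set X := projT1 (cid (proj2_sig x)).
Lemma rep_M x : M (rep x).
Proof. by rewrite /rep; case: cid => m /= []. Qed.
Lemma rep_cls x : proj1_sig x = cls M N (rep x).
Proof. by rewrite /rep; case: cid => m /= []. Qed.

Lemma rep_clsP x m : proj1_sig x m <-> cls M N (rep x) m.
Proof. by have e := rep_cls x; split => h; [rewrite -e|rewrite e]. Qed.

Definition cl (A : set X) : L :=
  match pselect (M A) with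
  | left p => qmap M N (exist _ A p)
  | right _ => qmap M N (exist _ set0 M0)
  end.

Lemma L_eq (x y : L) : proj1_sig x = proj1_sig y -> x = y.
Proof.
case: x => x px; case: y => y py /= exy; subst y.
by congr exist; apply: Prop_irrelevance.
Qed.

Lemma qmap_cl (a : Msub M) : qmap M N a = cl (proj1_sig a).
Proof.
rewrite /cl; case: pselect => [p|]; last by case: a => ? ? /=.
by apply: L_eq.
Qed.

Lemma cl_val A : M A -> proj1_sig (cl A) = cls M N A.
Proof. by move=> mA; rewrite /cl; case: pselect. Qed.

Lemma symdiffC A B : symdiff A B = symdiff B A.
Proof. by seqsolve. Qed.

Lemma cls_eq A B : M A -> M B -> N (symdiff A B) -> cls M N A = cls M N B.
Proof.
move=> mA mB nAB; apply/seteqP; split => m [mm h]; split => //.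
  by apply: Nsub2 nAB h _; ssolve.
by apply: Nsub2 nAB h _; ssolve.
Qed.

Lemma cls_self A : M A -> cls M N A A.
Proof.
by move=> mA; split => //; apply: Nsub N0 _; ssolve.
Qed.

Lemma cls_mem A B : M A -> cls M N A B -> N (symdiff A B).
Proof. by move=> _ []. Qed.

Lemma cl_rep x : cl (rep x) = x.
Proof. by apply: L_eq; rewrite cl_val; [symmetry; apply: rep_cls|apply: rep_M]. Qed.

Lemma cl_eq A B : M A -> M B -> (cl A = cl B <-> N (symdiff A B)).
Proof.
move=> mA mB; split => [e|n].
  have : proj1_sig (cl B) A by rewrite -e cl_val //; exact: cls_self.
  by rewrite cl_val // => /(cls_mem mB); rewrite symdiffC.
by apply: L_eq; rewrite !cl_val //; apply: cls_eq.
Qed.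

Lemma rep_cl A : M A -> N (symdiff A (rep (cl A))).
Proof. by move=> mA; apply/cl_eq; rewrite ?cl_rep //; apply: rep_M. Qed.

Lemma le_iff x y : le x y <-> N (rep x `\` rep y).
Proof.
split.
  case=> ma [mb [/rep_clsP [_ h1] [/rep_clsP [_ h2] h3]]].
  by apply: Nsub3 h1 h3 h2 _; ssolve.
move=> h; exists (rep x), (rep y).
by split; [|split] => //; apply/rep_clsP; apply: cls_self; apply: rep_M.
Qed.

Lemma le_cl A B : M A -> M B -> (le (cl A) (cl B) <-> N (A `\` B)).
Proof.
move=> mA mB; rewrite le_iff; have hA := rep_cl mA; have hB := rep_cl mB.
split => h.
  by apply: Nsub3 hA h hB _; ssolve.
by apply: Nsub3 hA h hB _; ssolve.
Qed.

Lemma le_cll A y : M A -> (le (cl A) y <-> N (A `\` rep y)).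
Proof. by move=> mA; rewrite -{1}(cl_rep y); apply: le_cl => //; apply: rep_M. Qed.
Lemma le_clr x B : M B -> (le x (cl B) <-> N (rep x `\` B)).
Proof. by move=> mB; rewrite -{1}(cl_rep x); apply: le_cl => //; apply: rep_M. Qed.

Lemma lle_refl x : le x x.
Proof. by apply/le_iff; apply: Nsub N0 _; ssolve. Qed.

Lemma lle_trans x y z : le x y -> le y z -> le x z.
Proof.
move=> /le_iff h1 /le_iff h2; apply/le_iff.
by apply: Nsub2 h1 h2 _; ssolve.
Qed.

Lemma lle_anti x y : le x y -> le y x -> x = y.
Proof.
move=> /le_iff h1 /le_iff h2; rewrite -(cl_rep x) -(cl_rep y).
by apply/cl_eq; [apply: rep_M|apply: rep_M|apply: NU2].
Qed.

Lemma lub_cl A B : M A -> M B -> is_lub (cl A) (cl B) (cl (A `|` B)).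
Proof.
move=> mA mB; have mAB := MU2 mA mB.
split.
- by apply/le_cl => //; apply: Nsub N0 _; ssolve.
- by apply/le_cl => //; apply: Nsub N0 _; ssolve.
move=> z /(le_cll _ mA) h1 /(le_cll _ mB) h2; apply/le_cll => //.
by apply: Nsub2 h1 h2 _; ssolve.
Qed.

Lemma glb_cl A B : M A -> M B -> is_glb (cl A) (cl B) (cl (A `&` B)).
Proof.
move=> mA mB; have mAB := MI mA mB.
split.
- by apply/le_cl => //; apply: Nsub N0 _; ssolve.
- by apply/le_cl => //; apply: Nsub N0 _; ssolve.
move=> z /(le_clr _ mA) h1 /(le_clr _ mB) h2; apply/le_clr => //.
by apply: Nsub2 h1 h2 _; ssolve.
Qed.

Lemma lub_uniq x y j j' : is_lub x y j -> is_lub x y j' -> j = j'.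
Proof.
case=> h1 h2 h3 [h1' h2' h3']; apply: lle_anti; [exact: h3|exact: h3'].
Qed.
Lemma glb_uniq x y j j' : is_glb x y j -> is_glb x y j' -> j = j'.
Proof.
case=> h1 h2 h3 [h1' h2' h3']; apply: lle_anti; [exact: h3'|exact: h3].
Qed.

Lemma bot_cl0 : is_bot (cl set0).
Proof. by move=> a; apply/le_cll; [exact: M0|apply: Nsub N0 _; ssolve]. Qed.

Lemma is_bot_null z : is_bot z -> N (rep z).
Proof.
move=> /(_ (cl set0)) /le_clr h; have := h M0.
by move=> h0; apply: Nsub h0 _; ssolve.
Qed.

Lemma null_bot A : M A -> N A -> is_bot (cl A).
Proof. by move=> mA nA a; apply/le_cll => //; apply: Nsub nA _; ssolve. Qed.

Lemma top_clT : is_top (cl setT).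
Proof. by move=> a; apply/le_clr; [exact: MT|apply: Nsub N0 _; ssolve]. Qed.


Definition ext {K : numFieldType} (mu : Msub M -> K) (A : set X) : K := gext mu A.

Lemma ext_E {K : numFieldType} (mu : Msub M -> K) A (p : M A) :
  ext mu A = mu (exist _ A p).
Proof. exact: gext_E. Qed.

Definition fm {K : numFieldType} (m : set X -> K) :=
  (forall A, N A -> m A = 0) /\
  (forall F : nat -> set X, (forall i, M (F i)) ->
     (forall i j, i != j -> F i `&` F j = set0) ->
     forall e : K, 0 < e -> exists n0, forall n, (n0 <= n)%N ->
       `|\sum_(i < n) m (F i) - m (\bigcup_n F n)| < e).

Lemma fm_ext {K : numFieldType} (mu : Msub M -> K) :
  finite_measure M N mu -> fm (ext mu).
Proof.
case=> h1 h2; split.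
  by move=> A nA; rewrite (ext_E _ (NM nA)); apply: h1.
move=> F mF dF e e0.
have mU := MU mF.
have := h2 (fun i => exist _ (F i) (mF i)) (exist _ _ mU) dF erefl e e0.
case=> n0 hn0; exists n0 => n /hn0.
rewrite (ext_E _ mU); congr (`|_ - _| < _).
by apply: eq_bigr => i _; rewrite (ext_E _ (mF i)).
Qed.

Lemma small0 {K : numFieldType} (x : K) : (forall e, 0 < e -> `|x| < e) -> x = 0.
Proof.
move=> h; apply/eqP; apply/negP => /negP nx.
by move: (h `|x|); rewrite normr_gt0 nx ltxx => /(_ isT).
Qed.

Section FM.
Context {K : numFieldType} (m : set X -> K) (hm : fm m).

Lemma fmN A : N A -> m A = 0. Proof. by case: hm => h _; apply: h. Qed.

Lemma fm_add2 A B : M A -> M B -> A `&` B = set0 -> m (A `|` B) = m A + m B.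
Proof.
move=> mA mB AB.
pose F := bigcup2 A B.
have mF : forall i, M (F i) by move=> [|[|i]] //=; apply: M0.
have dF : forall i j, i != j -> F i `&` F j = set0.
  move=> [|[|i]] [|[|j]] //= _; rewrite ?set0I ?setI0 //.
  by rewrite setIC.
have hs n : \sum_(i < n.+2) m (F i) = m A + m B.
  elim: n => [|n IH]; first by rewrite !big_ord_recl big_ord0 /= addr0.
  by rewrite big_ord_recr IH /= (fmN N0) addr0.
apply/eqP; rewrite eq_sym -subr_eq0; apply/eqP; apply: small0 => e e0.
case: hm => _ /(_ F mF dF e e0) [n0 hn0].
have := hn0 n0.+2 (leqW (leqnSn n0)); rewrite hs bigcup2E.
by rewrite distrC.
Qed.

Lemma fm_split A B : M A -> M B -> m A = m (A `&` B) + m (A `\` B).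
Proof.
move=> mA mB; rewrite -fm_add2; [|exact: MI|exact: MD|].
  by congr m; seqsolve.
by apply/seteqP; split => // t /=; tauto.
Qed.

Lemma fm_inv A B : M A -> M B -> N (symdiff A B) -> m A = m B.
Proof.
move=> mA mB nAB.
rewrite (fm_split mA mB) (fm_split mB mA).
have n1 : N (A `\` B) by apply: Nsub nAB _; ssolve.
have n2 : N (B `\` A) by apply: Nsub nAB _; ssolve.
by rewrite (fmN n1) (fmN n2) setIC.
Qed.

Lemma fm_incr (y : nat -> set X) : (forall n, M (y n)) ->
  (forall n, y n `<=` y n.+1) ->
  forall e, 0 < e -> exists n0, forall n, (n0 <= n)%N ->
    `|m (y n) - m (\bigcup_n y n)| < e.
Proof.
move=> my iy e e0.
have mono : forall i j, (i <= j)%N -> y i `<=` y j.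
  move=> i j /subnK <-; elim: (j - i)%N => [|k IH] //.
  by rewrite addSn; apply: subset_trans IH (iy _).
pose D n := match n with 0 => y 0 | k.+1 => y k.+1 `\` y k end.
have mD : forall i, M (D i) by move=> [|i] /=; [|apply: MD].
have dD : forall i j, (i < j)%N -> D i `&` D j = set0.
  move=> i [//|j] ij; apply/seteqP; split => // t [].
  case: i ij => [|i] ij /=.
    by move=> y0 [_]; apply; apply: mono y0; rewrite -ltnS.
  by move=> [yi _] [_]; apply; apply: mono yi.
have dD' : forall i j, i != j -> D i `&` D j = set0.
  move=> i j; rewrite neq_ltn => /orP [] ij; first exact: dD.
  by rewrite setIC; apply: dD.
have UD : \bigcup_n D n = \bigcup_n y n.
  apply/seteqP; split => t [n _].
    by case: n => [|n] /= h; [exists 0|exists n.+1] => //; case: h.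
  elim: n => [|n IH] h; first by exists 0.
  case: (pselect (y n t)) => [/IH //|nyt].
  by exists n.+1.
have sD : forall n, \sum_(i < n.+1) m (D i) = m (y n).
  elim=> [|n IH]; first by rewrite big_ord1.
  rewrite big_ord_recr IH /= -fm_add2 //; last 2 first.
  - exact: MD.
  - by apply/seteqP; split => // t /= [? []].
  by congr m; apply/seteqP; split => t /=; [case|]; [move=> /iy|tauto|case: (pselect (y n t)); tauto].
case: hm => _ /(_ D mD dD' e e0) [n0 hn0].
exists n0 => n hn; rewrite -sD -UD; apply: hn0.
by apply: leq_trans hn _.
Qed.

End FM.

Variable R : realType.

Lemma fm_Re (m : set X -> R[i]) : fm m -> fm (fun A => complex.Re (m A)).
Proof.
move=> hm; split.
  by move=> A nA; rewrite (fmN hm nA).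
move=> F mF dF e e0.
case: hm => _ /(_ F mF dF e%:C) []; first by rewrite ltcR.
move=> n0 hn0; exists n0 => n /hn0 h.
rewrite -raddf_sum -raddfB -ltcR; exact: le_lt_trans (norm_Re _) h.
Qed.

Lemma fm_Im (m : set X -> R[i]) : fm m -> fm (fun A => complex.Im (m A)).
Proof.
move=> hm; split.
  by move=> A nA; rewrite (fmN hm nA).
move=> F mF dF e e0.
case: hm => _ /(_ F mF dF e%:C) []; first by rewrite ltcR.
move=> n0 hn0; exists n0 => n /hn0 h.
rewrite -raddf_sum -raddfB -ltcR; exact: le_lt_trans (norm_Im _) h.
Qed.

Lemma hahn_fm (f : set X -> R) : fm f -> exists P, M P /\
  (forall c, M c -> c `<=` P -> 0 <= f c) /\ (forall c, M c -> c `<=` ~` P -> f c <= 0).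
Proof.
move=> hf; case: (pselect (exists x : X, True)) => [[x0 _]|nX].
  apply: (hahn_aux x0 HMs); first exact: (fmN hf N0).
  by case: hf.
exists set0; split; first exact: M0.
have e0 : forall c : set X, c = set0.
  by move=> c; apply/seteqP; split => // t _; apply: nX; exists t.
by split => c _ _; rewrite (e0 c) (fmN hf N0).
Qed.

Lemma disj_sub A B A' B' : A `&` B = set0 -> A' `<=` A -> B' `<=` B -> A' `&` B' = set0.
Proof.
move=> AB hA hB; apply/seteqP; split => // t [/hA a /hB b].
have : (A `&` B) t by split.
by rewrite AB.
Qed.

Section PosPart.
Context (f : set X -> R) (hf : fm f) (P : set X) (mP : M P)
  (pos : forall c, M c -> c `<=` P -> 0 <= f c)
  (neg : forall c, M c -> c `<=` ~` P -> f c <= 0).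

Definition q A := f (A `&` P) - f (A `\` P).

Lemma q_ge0 A : M A -> 0 <= q A.
Proof.
move=> mA; rewrite /q.
have h1 := pos (MI mA mP) (@subIsetr _ _ _).
have h2 : f (A `\` P) <= 0 by apply: neg; [apply: MD|move=> t []].
lra.
Qed.

Lemma q_add A B : M A -> M B -> A `&` B = set0 -> q (A `|` B) = q A + q B.
Proof.
move=> mA mB AB; rewrite /q.
have -> : (A `|` B) `&` P = (A `&` P) `|` (B `&` P) by seqsolve.
have -> : (A `|` B) `\` P = (A `\` P) `|` (B `\` P) by seqsolve.
have d1 : (A `&` P) `&` (B `&` P) = set0 by apply: (disj_sub AB) => t [].
have d2 : (A `\` P) `&` (B `\` P) = set0 by apply: (disj_sub AB) => t [].
rewrite (fm_add2 hf (MI mA mP) (MI mB mP) d1) (fm_add2 hf (MD mA mP) (MD mB mP) d2).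
lra.
Qed.

Lemma q_bound c : M c -> `|f c| <= q c.
Proof.
move=> mc; rewrite (fm_split hf mc mP) /q.
have h1 := pos (MI mc mP) (@subIsetr _ _ _).
have h2 : f (c `\` P) <= 0 by apply: neg; [apply: MD|move=> t []].
rewrite ler_norml; apply/andP; split; lra.
Qed.

Lemma q_mono A B : M A -> M B -> B `<=` A -> q B <= q A.
Proof.
move=> mA mB BA.
have -> : A = B `|` (A `\` B) by apply/seteqP; split => t /=;
  [case: (pselect (B t)); tauto | case; [apply: BA|case]].
have mAB := MD mA mB.
rewrite q_add //; last by apply/seteqP; split => // t [? []].
by rewrite lerDl q_ge0.
Qed.

Lemma q_van A : M A -> (forall c, M c -> c `<=` A -> f c = 0) -> q A = 0.
Proof.
move=> mA h.
have h1 : f (A `&` P) = 0 by apply: h; [apply: MI|move=> t []].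
have h2 : f (A `\` P) = 0 by apply: h; [apply: MD|move=> t []].
by rewrite /q h1 h2 subr0.
Qed.

Lemma q_inv A B : M A -> M B -> N (symdiff A B) -> q A = q B.
Proof.
move=> mA mB nAB; rewrite /q.
rewrite (fm_inv hf (MI mA mP) (MI mB mP)); last by apply: Nsub nAB _; ssolve.
rewrite (fm_inv hf (MD mA mP) (MD mB mP)) //; by apply: Nsub nAB _; ssolve.
Qed.

Lemma q_incr (y : nat -> set X) : (forall n, M (y n)) -> (forall n, y n `<=` y n.+1) ->
  forall e, 0 < e -> exists n0, forall n, (n0 <= n)%N -> q (\bigcup_n y n) - q (y n) < e.
Proof.
move=> my iy e e0.
have e2 : 0 < e / 2 by rewrite divr_gt0.
have i1 : forall n, y n `&` P `<=` y n.+1 `&` P.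
  by move=> n t [a b]; split => //; apply: iy.
have i2 : forall n, y n `\` P `<=` y n.+1 `\` P.
  by move=> n t [a b]; split => //; apply: iy.
have [n1 h1] := fm_incr hf (fun n => MI (my n) mP) i1 e2.
have [n2 h2] := fm_incr hf (fun n => MD (my n) mP) i2 e2.
exists (maxn n1 n2) => n; rewrite geq_max => /andP [hn1 hn2].
have := h1 n hn1; have := h2 n hn2.
have -> : \bigcup_n (y n `&` P) = (\bigcup_n y n) `&` P.
  apply/seteqP; split => t /=.
    by case=> k _ [a b]; split => //; exists k.
  by case=> [[k _ a] b]; exists k.
have -> : \bigcup_n (y n `\` P) = (\bigcup_n y n) `\` P.
  apply/seteqP; split => t /=.
    by case=> k _ [a b]; split => //; exists k.
  by case=> [[k _ a] b]; exists k.
rewrite /q !ltr_norml => /andP [? ?] /andP [? ?]; lra.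
Qed.

End PosPart.

Definition rho_ok (m : set X -> R[i]) (rho : set X -> R) :=
 [/\ (forall A, M A -> 0 <= rho A),
     (forall A B, M A -> M B -> A `&` B = set0 -> rho (A `|` B) = rho A + rho B),
     (forall A B, M A -> M B -> N (symdiff A B) -> rho A = rho B),
     (forall c A, M c -> M A -> c `<=` A -> `|m c| <= (rho A)%:C) &
     ((forall A, M A -> (forall c, M c -> c `<=` A -> m c = 0) -> rho A = 0) /\
     (forall y : nat -> set X, (forall n, M (y n)) -> (forall n, y n `<=` y n.+1) ->
        forall e, 0 < e -> exists n0, forall n, (n0 <= n)%N ->
          rho (\bigcup_n y n) - rho (y n) < e))].

Lemma rho_exists (m : set X -> R[i]) : fm m -> exists rho, rho_ok m rho.
Proof.
move=> hm.
have hf1 := fm_Re hm; have hf2 := fm_Im hm.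
have [P1 [mP1 [pos1 neg1]]] := hahn_fm hf1.
have [P2 [mP2 [pos2 neg2]]] := hahn_fm hf2.
pose q1 := q (fun A => complex.Re (m A)) P1.
pose q2 := q (fun A => complex.Im (m A)) P2.
exists (fun A => q1 A + q2 A); split.
- by move=> A mA; rewrite addr_ge0 // /q1 /q2 q_ge0.
- move=> A B mA mB AB; rewrite /q1 /q2 !q_add //; lra.
- by move=> A B mA mB nAB; rewrite /q1 /q2 (q_inv hf1 mP1 mA mB nAB) (q_inv hf2 mP2 mA mB nAB).
- move=> c A mc mA cA; apply: le_trans (norm_le_ReIm _) _; rewrite lecR.
  apply: lerD.
    apply: le_trans (q_bound hf1 mP1 pos1 neg1 mc) _.
    exact: q_mono.
  apply: le_trans (q_bound hf2 mP2 pos2 neg2 mc) _.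
  exact: q_mono.
split.
  move=> A mA h.
  have z1 : q1 A = 0 by apply: q_van => // c mc cA; rewrite h.
  have z2 : q2 A = 0 by apply: q_van => // c mc cA; rewrite h.
  by rewrite z1 z2 addr0.
  move=> y my iy e e0.
have e2 : 0 < e / 2 by rewrite divr_gt0.
have [n1 h1] := q_incr hf1 mP1 my iy e2.
have [n2 h2] := q_incr hf2 mP2 my iy e2.
exists (maxn n1 n2) => n; rewrite geq_max => /andP [hn1 hn2].
have := h1 n hn1; have := h2 n hn2; rewrite /q1 /q2; lra.
Qed.

Lemma archi_inv (d : R) : 0 < d -> exists n : nat, (n.+1%:R)^-1 < d.
Proof.
move=> d0; have h := truncnS_gt (d^-1); exists (Num.Def.trunc (d^-1)).
rewrite invf_plt ?posrE ?ltr0n ?invr_gt0 //.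
Qed.

Section RhoGen.
Context (rho : set X -> R)
  (r0 : forall A, M A -> 0 <= rho A)
  (radd : forall A B, M A -> M B -> A `&` B = set0 -> rho (A `|` B) = rho A + rho B)
  (rinv : forall A B, M A -> M B -> N (symdiff A B) -> rho A = rho B).

Lemma rmono A B : M A -> M B -> A `<=` B -> rho A <= rho B.
Proof.
move=> mA mB AB.
have -> : B = A `|` (B `\` A) by apply/seteqP; split => t /=;
  [case: (pselect (A t)); tauto | case; [apply: AB|case]].
have mBA := MD mB mA.
rewrite radd //; last by apply/seteqP; split => // t [? []].
by rewrite lerDl r0.
Qed.

Lemma rdiff A B : M A -> M B -> B `<=` A -> rho (A `\` B) = rho A - rho B.
Proof.
move=> mA mB BA.
have {2}-> : A = B `|` (A `\` B) by apply/seteqP; split => t /=;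
  [case: (pselect (B t)); tauto | case; [apply: BA|case]].
have mAB := MD mA mB.
rewrite radd //; last by apply/seteqP; split => // t [? []].
by rewrite addrC addKr.
Qed.

Lemma rsub A B : M A -> M B -> rho (A `|` B) <= rho A + rho B.
Proof.
move=> mA mB.
have -> : A `|` B = A `|` (B `\` A) by seqsolve.
have mBA := MD mB mA.
rewrite radd //; last by apply/seteqP; split => // t [? []].
by rewrite lerD2l rmono // => t [].
Qed.

Lemma rnull A : M A -> N A -> rho A = 0.
Proof.
move=> mA nA; have -> : rho A = rho set0 by apply: rinv => //; [exact: M0|apply: Nsub nA _; ssolve].
have := radd M0 M0 (setI0 set0); rewrite setU0.
move=> h; lra.
Qed.

Lemma exhaust (I : set L) (g : set X) : directed I -> M g ->
  exists w : nat -> set X, [/\ (forall n, M (w n)), (forall n, I (cl (w n))),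
     (forall n, w n `<=` w n.+1) &
     (forall x, I x -> rho ((g `\` \bigcup_n w n) `&` rep x) = 0)].
Proof.
move=> [[x00 Ix00] dirI] mg.
pose S := [set r | exists2 x, I x & r = rho (g `&` rep x)].
have hS : has_sup S.
  split; first by exists (rho (g `&` rep x00)); exists x00.
  exists (rho setT) => r [x Ix ->]; apply: rmono => //; [apply: MI => //; apply: rep_M|exact: MT].
pose sig := sup S.
have : forall n : nat, exists x, I x /\ sig - (n.+1%:R)^-1 < rho (g `&` rep x).
  move=> n; have e0 : 0 < (n.+1%:R : R)^-1 by rewrite invr_gt0 ltr0Sn.
  have [r [x Ix ->] h] := sup_adherent e0 hS.
  by exists x.
move=> /choice [xs hxs].
have : forall p : L * L, exists z, I p.1 -> I p.2 -> [/\ I z, le p.1 z & le p.2 z].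
  move=> p; case: (pselect (I p.1 /\ I p.2)) => [[h1 h2]|nh].
    by have [z hz] := dirI _ _ h1 h2; exists z.
  by exists p.1 => h1 h2; exfalso; apply: nh.
move=> /choice [ub hub].
pose w := fix w n := match n with
  | 0 => rep (xs 0)
  | k.+1 => w k `|` rep (ub (cl (w k), xs k.+1)) end.
have inv : forall n, [/\ M (w n), I (cl (w n)) & N (rep (xs n) `\` w n)].
  elim=> [|k [mk Ik nk]] /=.
    rewrite cl_rep; split; [exact: rep_M|by case: (hxs 0)|].
    by apply: Nsub N0 _; ssolve.
  have [Iu le1 le2] := hub (cl (w k), xs k.+1) Ik (proj1 (hxs k.+1)).
  set u := ub _ in Iu le1 le2 *.
  have mu := rep_M u.
  have n1 : N (w k `\` rep u) by apply/le_cll.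
  have n2 : N (rep (xs k.+1) `\` rep u) by apply/le_iff.
  split; first exact: MU2.
    suff -> : cl (w k `|` rep u) = u by [].
    rewrite -{2}(cl_rep u); apply/cl_eq; [exact: MU2|exact: mu|].
    by apply: Nsub n1 _; ssolve.
  by apply: Nsub n2 _; ssolve.
have mw : forall n, M (w n) by move=> n; case: (inv n).
have mW : M (\bigcup_n w n) by apply: MU.
exists w; split => //.
- by move=> n; case: (inv n).
- by move=> n t /= h; left.
move=> x Ix; apply: contrapT => hne.
have mA2 : M ((g `\` \bigcup_n w n) `&` rep x) by apply: MI; [apply: MD|apply: rep_M].
set d := rho _ in hne.
have d0 : 0 < d by rewrite lt_neqAle eq_sym; apply/andP; split; [apply/eqP|apply: r0].
have [n hn] := archi_inv d0.
have [_ Iwn nxn] := inv n.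
have [Iz lz1 lz2] := hub (cl (w n), x) Iwn Ix.
set z := ub _ in Iz lz1 lz2.
have mz := rep_M z.
have up : rho (g `&` rep z) <= sig.
  by apply: sup_upper_bound => //; exists z.
have [Ixn hxn] := hxs n.
have mxn := rep_M (xs n).
pose A1 := g `&` rep (xs n) `&` w n.
have mA1 : M A1 by apply: MI => //; apply: MI.
have e1 : rho A1 = rho (g `&` rep (xs n)).
  apply: rinv => //; first by apply: MI.
  by apply: Nsub nxn _; rewrite /A1; ssolve.
have dis : A1 `&` ((g `\` \bigcup_n w n) `&` rep x) = set0.
  apply/seteqP; split => // t /= [[_ wt] [[_ nW] _]]; apply: nW; by exists n.
have e2 := radd mA1 mA2 dis.
have nz1 : N (w n `\` rep z) by apply/le_cll.
have nz2 : N (rep x `\` rep z) by apply/le_iff.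
have mU := MU2 mA1 mA2.
have e3 : rho (A1 `|` (g `\` \bigcup_n w n) `&` rep x) =
          rho ((A1 `|` (g `\` \bigcup_n w n) `&` rep x) `&` rep z).
  apply: rinv => //; first by apply: MI.
  apply: Nsub2 nz1 nz2 _; move=> t /=; rewrite /symdiff /=; rewrite /A1 /=; tauto.
have le3 : rho ((A1 `|` (g `\` \bigcup_n w n) `&` rep x) `&` rep z) <= rho (g `&` rep z).
  apply: rmono; [by apply: MI|by apply: MI|].
  by move=> t; rewrite /A1 /=; tauto.
have hd : d = rho ((g `\` \bigcup_n w n) `&` rep x) by [].
move: up le3 hn hxn; rewrite -e3 e2 e1 -hd.
clearbody d; move: (n.+1%:R^-1) => i; lra.
Qed.

End RhoGen.

Lemma incr_mono (y : nat -> set X) : (forall n, y n `<=` y n.+1) ->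
  forall i j, (i <= j)%N -> y i `<=` y j.
Proof.
move=> iy i j /subnK <-; elim: (j - i)%N => [|k IH] //.
by rewrite addSn; apply: subset_trans IH (iy _).
Qed.

Lemma val_CA {K : numFieldType} (D : set L) (g : L -> K) :
  (forall x y, D y -> le x y -> D x) -> valuation_on D g -> continuous_on D g ->
  forall F : nat -> set X, (forall i, M (F i)) ->
  (forall i j, i != j -> F i `&` F j = set0) ->
  D (cl (\bigcup_n F n)) ->
  forall e, 0 < e -> exists n0, forall n, (n0 <= n)%N ->
    `|\sum_(i < n) g (cl (F i)) - g (cl (\bigcup_n F n))| < e.
Proof.
move=> Dd [g0 gv] gc F mF dF DU e e0.
pose B := fix B n := match n with 0 => set0 | k.+1 => B k `|` F k end.
have mB : forall n, M (B n) by elim=> [|k IH] /=; [exact: M0|exact: MU2].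
have BU : forall n, B n `<=` \bigcup_n F n.
  by elim=> [|k IH] //= t [/IH //|Ft]; exists k.
have Bk : forall k t, B k t -> exists2 i, (i < k)%N & F i t.
  elim=> [|k IH] //= t [/IH [i ik Fi]|Fk]; first by exists i => //; apply: ltnW.
  by exists k.
have mUF := MU mF.
have leBU : forall n, le (cl (B n)) (cl (\bigcup_n F n)).
  move=> n; apply/(le_cl (mB n) mUF); apply: Nsub N0 _ => t [/BU h nh]; exact: nh h.
have DB : forall n, D (cl (B n)) by move=> n; apply: Dd DU _.
have DF : forall n, D (cl (F n)).
  move=> n; apply: Dd DU _; apply/(le_cl (mF n) mUF); apply: Nsub N0 _ => t [h nh].
  by apply: nh; exists n.
have BF : forall k, B k `&` F k = set0.
  move=> k; apply/seteqP; split => // t [/Bk [i ik Fi] Fk].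
  have : (F i `&` F k) t by split.
  by rewrite dF // neq_ltn ik.
have sums : forall n, \sum_(i < n) g (cl (F i)) = g (cl (B n)).
  elim=> [|k IH]; first by rewrite big_ord0 /= g0 //; exact: bot_cl0.
  rewrite big_ord_recr /= IH.
  have := gv _ _ _ _ (DB k) (DF k) (lub_cl (mB k) (mF k)) (glb_cl (mB k) (mF k)).
  by rewrite BF (g0 _ bot_cl0) addr0.
pose I := [set x | exists n, x = cl (B n)].
have mono := @incr_mono B (fun n t h => or_introl h).
have dirI : directed I.
  split; first by exists (cl (B 0)); exists 0.
  move=> x y [i ->] [j ->]; exists (cl (B (maxn i j))); split.
  - by exists (maxn i j).
  - apply/(le_cl (mB i) (mB _)); apply: Nsub N0 _ => t [/(mono i (maxn i j)) h nh].
    by apply: nh; apply: h; rewrite leq_maxl.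
  - apply/(le_cl (mB j) (mB _)); apply: Nsub N0 _ => t [/(mono j (maxn i j)) h nh].
    by apply: nh; apply: h; rewrite leq_maxr.
have supI : is_sup I (cl (\bigcup_n F n)).
  split; first by move=> x [n ->].
  move=> z hz; apply/(le_cll _ mUF).
  have hn : forall n, N (B n.+1 `\` rep z).
    by move=> n; apply/(le_cll _ (mB n.+1)); apply: hz; exists n.+1.
  apply: Nsub (NU hn) _ => t [[n _ Fn] nz]; exists n => //; split => //; by right.
have sI : I `<=` D by move=> x [n ->]; exact: DB n.
have [x0 [[k ->] hk]] := gc I _ sI dirI supI e e0.
exists k => n kn; rewrite sums; apply: hk; first by exists n.
apply/(le_cl (mB k) (mB n)); apply: Nsub N0 _ => t [/(mono k n kn) h nh].
exact: nh h.
Qed.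

Lemma val_C (D : set L) (f : L -> R) : valuation_on D f -> valuation_on D (fun x => (f x)%:C).
Proof.
case=> h0 hv; split; first by move=> z /h0 ->.
move=> x y j m Dx Dy hl hg; rewrite -!rmorphD /=; congr (_%:C); exact: hv.
Qed.

Lemma cont_C (D : set L) (f : L -> R) : continuous_on D f -> continuous_on D (fun x => (f x)%:C).
Proof.
move=> h I s sI dI sup e e0; have [ee e0'] := posC e0.
have [x0 [Ix0 hx]] := h I s sI dI sup _ e0'.
exists x0; split => // x Ix lx; rewrite ee -rmorphB norm_realC ltcR; exact: hx.
Qed.

Lemma part1_fm (nu : L -> R[i]) : continuous_valuation nu -> finite_measure M N (nu \o qmap M N).
Proof.
case=> [[g0 gv] gc]; split.
  move=> m nm /=; rewrite qmap_cl; apply: g0; apply: null_bot => //; exact: proj2_sig m.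
move=> A U dA eU e e0.
have := @val_CA _ setT nu (fun _ _ _ _ => I) (conj g0 gv) gc (fun i => proj1_sig (A i))
   (fun i => proj2_sig (A i)) dA I e e0.
case=> n0 hn0; exists n0 => n /hn0; rewrite /= qmap_cl eU.
congr (`|_ - _| < _); apply: eq_bigr => i _; by rewrite qmap_cl.
Qed.

Lemma img_bigcup (G : set X) (A : nat -> set (Defs.sub_type G)) :
  (@proj1_sig X G) @` (\bigcup_n A n) = \bigcup_n ((@proj1_sig X G) @` A n).
Proof.
apply/seteqP; split => t.
  by case=> u [n _ Au] <-; exists n => //; exists u.
by case=> n _ [u Au <-]; exists u => //; exists n.
Qed.

Lemma part1_ess (nu : L -> R[i]) : localizable R M N -> continuous_valuation nu ->
  essential R M N (nu \o qmap M N).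
Proof.
move=> [_ _ hloc] [[g0 gv] gc] m hm.
have [a [am nua]] : exists a : Msub M, proj1_sig a `<=` proj1_sig m /\
    nu (cl (proj1_sig a)) <> 0.
  apply: contrapT => hn; apply: hm => a am; rewrite /= qmap_cl.
  apply: contrapT => ne; apply: hn; by exists a.
set A := proj1_sig a in am nua *.
have mA : M A := proj2_sig a.
have [supU supL] := hloc _ top_clT.
have [y [Sy [c [mc cAy nuc]]]] : exists y, (exists f : L -> R,
    [/\ (forall b, le b y -> 0 <= f b), valuation_on (downset y) f,
        continuous_on (downset y) f & (forall b, le b y -> f b = 0 -> is_bot b)]) /\
    exists c, [/\ M c, c `<=` A `&` rep y & nu (cl c) <> 0].
  apply: contrapT => hn.
  have H : forall y, (exists f : L -> R,
    [/\ (forall b, le b y -> 0 <= f b), valuation_on (downset y) f,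
        continuous_on (downset y) f & (forall b, le b y -> f b = 0 -> is_bot b)]) ->
    forall c, M c -> c `<=` A `&` rep y -> nu (cl c) = 0.
    move=> y Sy c mc cA; apply: contrapT => ne; apply: hn; exists y; split => //.
    by exists c.
  pose J := [set x : L | exists c, [/\ M c, c `<=` A,
     (forall d, M d -> d `<=` c -> nu (cl d) = 0) & x = cl c]].
  have van2 : forall c1 c2, M c1 -> M c2 -> (forall d, M d -> d `<=` c1 -> nu (cl d) = 0) ->
     (forall d, M d -> d `<=` c2 -> nu (cl d) = 0) ->
     forall d, M d -> d `<=` c1 `|` c2 -> nu (cl d) = 0.
    move=> c1 c2 m1 m2 h1 h2 d md dc.
    have md1 := MI md m1; have md2 := MD md m1.
    have := gv _ _ _ _ I I (lub_cl md1 md2) (glb_cl md1 md2).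
    have -> : d `&` c1 `|` d `\` c1 = d by seqsolve.
    have -> : d `&` c1 `&` (d `\` c1) = set0 by seqsolve.
    have z1 : nu (cl (d `&` c1)) = 0 by apply: h1 => // t [].
    have z2 : nu (cl (d `\` c1)) = 0.
      by apply: h2 => // t [dt nc]; case: (dc t dt).
    by rewrite (g0 _ bot_cl0) z1 z2 !addr0 => /esym.
  have dirJ : directed J.
    split.
      exists (cl set0); exists set0; split => //; first exact: M0.
      move=> d md d0; apply: g0; apply: null_bot => //.
      by apply: Nsub N0 d0.
    move=> x1 x2 [c1 [m1 c1A v1 ->]] [c2 [m2 c2A v2 ->]].
    have m12 := MU2 m1 m2.
    exists (cl (c1 `|` c2)); split.
    - exists (c1 `|` c2); split => //; last exact: van2.
      by move=> t [/c1A|/c2A].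
    - by apply/(le_cl m1 m12); apply: Nsub N0 _; ssolve.
    - by apply/(le_cl m2 m12); apply: Nsub N0 _; ssolve.
  have supJ : is_sup J (cl A).
    split.
      move=> x [c1 [m1 c1A _ ->]]; apply/(le_cl m1 mA); apply: Nsub N0 _ => t [/c1A h nh].
      exact: nh h.
    move=> z hz; apply/(le_cll _ mA).
    have mz := rep_M z.
    have mw : M (~` A `|` rep z) by apply: MU2 => //; apply: MC.
    have : le (cl setT) (cl (~` A `|` rep z)).
      apply: supL => y Sy; apply/(le_clr _ mw).
      have mc : M (A `&` rep y) by apply: MI => //; apply: rep_M.
      have : le (cl (A `&` rep y)) z.
        apply: hz; exists (A `&` rep y).
        split; [exact: mc | by move=> t [] | | by []].
        by move=> d md dA; apply: H Sy d md dA.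
      move=> /(le_cll _ mc) h; apply: Nsub h _; ssolve.
    move=> /(le_cl MT mw) h; apply: Nsub h _; ssolve.
  have e0 : 0 < `|nu (cl A)| by rewrite normr_gt0; apply/eqP.
  have [x0 [[c0 [m0 c0A v0 ->]] hx0]] := gc J (cl A) (fun _ _ => I) dirJ supJ _ e0.
  have Jc0 : J (cl c0) by exists c0; split.
  have := hx0 (cl c0) Jc0 (lle_refl _).
  by rewrite v0 // sub0r normrN ltxx.
case: Sy => f [fpos [f0 fv] fc ffaith].
pose G := A `&` rep y.
have mG : M G by apply: MI => //; apply: rep_M.
exists (exist _ G mG); split => /=.
- by move=> t [/am].
- pose lam := fun B : Msub (induced_M M G) => (f (cl ((@proj1_sig X G) @` proj1_sig B)))%:C.
  have Dd : forall x x', downset y x' -> le x x' -> downset y x.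
    by move=> x x' hx' hx; apply: lle_trans hx hx'.
  have subG : forall B : set (Defs.sub_type G), (@proj1_sig X G) @` B `<=` G.
    by move=> B t [u _ <-]; exact: proj2_sig u.
  have leG : forall B : set (Defs.sub_type G), M ((@proj1_sig X G) @` B) ->
      le (cl ((@proj1_sig X G) @` B)) y.
    move=> B mB; apply/(le_cll _ mB); apply: Nsub N0 _ => t [/subG [_ h] nh].
    exact: nh h.
  exists lam; split.
    split.
      move=> B nB; rewrite /lam f0 //; apply: null_bot => //; exact: NM.
    move=> A' U dA eU e e0.
    have mF : forall i, M ((@proj1_sig X G) @` proj1_sig (A' i)) by move=> i; exact: proj2_sig (A' i).
    have dF : forall i j, i != j -> (@proj1_sig X G) @` proj1_sig (A' i) `&`
        (@proj1_sig X G) @` proj1_sig (A' j) = set0.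
      move=> i j ij; apply/seteqP; split => // t [[u ui <-] [v vj evu]].
      have uv := sub_val_inj evu; subst v.
      have : (proj1_sig (A' i) `&` proj1_sig (A' j)) u by split.
      by rewrite dA.
    have mU : M ((@proj1_sig X G) @` proj1_sig U) := proj2_sig U.
    have eU' : \bigcup_n ((@proj1_sig X G) @` proj1_sig (A' n)) = (@proj1_sig X G) @` proj1_sig U.
      by rewrite eU img_bigcup.
    have := @val_CA _ (downset y) (fun x => (f x)%:C) Dd (val_C (conj f0 fv)) (cont_C fc) _ mF dF.
    rewrite eU' => /(_ (leG _ mU) e e0) [n0 hn0]; exists n0 => n /hn0.
    by rewrite /lam.
  move=> m'' hz.
  have mm := proj2_sig m''.
  have := hz m'' (fun t h => h); rewrite /lam => /complexI hf.
  have := ffaith _ (leG _ mm) hf => /is_bot_null hn.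
  apply: Nsub2 hn (rep_cl mm) _; ssolve.
- move=> hz; apply: nuc; have := hz (exist _ c mc) cAy; by rewrite /= qmap_cl.
Qed.

Lemma part3_val (mu : Msub M -> R[i]) : finite_measure M N mu ->
  valuation_on setT (fun Z => ext mu (rep Z)).
Proof.
move=> /fm_ext hm; split.
  by move=> z /is_bot_null; apply: (fmN hm).
move=> x y j m _ _ hl hg.
have mx := rep_M x; have my := rep_M y.
have -> : j = cl (rep x `|` rep y).
  by apply: (lub_uniq hl); rewrite -{1}(cl_rep x) -{1}(cl_rep y); apply: lub_cl.
have -> : m = cl (rep x `&` rep y).
  by apply: (glb_uniq hg); rewrite -{1}(cl_rep x) -{1}(cl_rep y); apply: glb_cl.
have mU := MU2 mx my; have mI := MI mx my.
rewrite -(fm_inv hm mU (rep_M _) (rep_cl mU)) -(fm_inv hm mI (rep_M _) (rep_cl mI)).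
rewrite (fm_split hm mx my).
have -> : rep x `|` rep y = rep y `|` (rep x `\` rep y) by seqsolve.
rewrite (fm_add2 hm my (MD mx my)); last by seqsolve.
ring.
Qed.

Lemma part3_comp (mu : Msub M -> R[i]) : finite_measure M N mu ->
  (fun Z => ext mu (rep Z)) \o qmap M N = mu.
Proof.
move=> hmu; have hm := fm_ext hmu.
apply: funext => a /=; rewrite qmap_cl.
have ma := proj2_sig a.
rewrite -(fm_inv hm ma (rep_M _) (rep_cl ma)) (ext_E _ ma).
congr mu; case: a ma => a0 p0 ma /=; congr exist; exact: Prop_irrelevance.
Qed.

Lemma img_pre (G : set X) (A : set X) :
  (@proj1_sig X G) @` [set u : Defs.sub_type G | A (proj1_sig u)] = A `&` G.
Proof.
apply/seteqP; split => t.
  by case=> u /= Au <-; split => //; exact: proj2_sig u.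
by case=> At Gt; exists (exist _ t Gt).
Qed.

Lemma part3_cont (mu : Msub M -> R[i]) : finite_measure M N mu -> essential R M N mu ->
  continuous_on setT (fun Z => ext mu (rep Z)).
Proof.
move=> hmu hess.
have hm := fm_ext hmu; set m := ext mu in hm *.
have [rho [r0 radd rinv rbound [rvan rincr]]] := rho_exists hm.
move=> I s _ dI [supU supL] e e0.
have [ee e0'] := posC e0.
set S := rep s; have mS : M S := rep_M s.
have [w [mw Iw iw hw]] := exhaust r0 radd rinv dI mS.
set W := \bigcup_n w n; have mW : M W := MU mw.
set r := S `\` W; have mr : M r := MD mS mW.
have claim : forall c, M c -> c `<=` r -> m c = 0.
  apply: contrapT => hneg.
  have nrz : ~ restr_zero mu r.
    move=> hz; apply: hneg => c mc cr; rewrite /m (ext_E _ mc).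
    exact: (hz (exist _ c mc) cr).
  have [m' [m'r sfm' nz']] := hess (exist _ r mr) nrz.
  set G := proj1_sig m' in m'r nz'; have mG : M G := proj2_sig m'.
  case: sfm' => lam [hlam faith].
  pose pre A := [set u : Defs.sub_type G | A (proj1_sig u)].
  have ipre : forall A, M A -> induced_M M G (pre A).
    by move=> A mA; rewrite /induced_M /= img_pre; apply: MI.
  pose lamX := fun A => gext lam (pre A).
  have hlamX : fm lamX.
    case: hlam => l1 l2; split.
      move=> A nA; rewrite /lamX (gext_E _ (ipre _ (NM nA))); apply: l1.
      by rewrite /induced_N /= img_pre; apply: Nsub nA _ => t [].
    move=> F mF dF e1 e10.
    have dF' : forall i j, i != j -> pre (F i) `&` pre (F j) = set0.
      move=> i j ij; apply/seteqP; split => // u [a b].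
      have : (F i `&` F j) (proj1_sig u) by split.
      by rewrite dF.
    have eU : pre (\bigcup_n F n) = \bigcup_n pre (F n).
      by apply/seteqP; split => u /= [n _ h]; exists n.
    have := l2 (fun i => exist _ (pre (F i)) (ipre _ (mF i)))
       (exist _ (pre (\bigcup_n F n)) (ipre _ (MU mF))) dF' eU e1 e10.
    case=> n0 hn0; exists n0 => n /hn0.
    rewrite /lamX (gext_E _ (ipre _ (MU mF))); congr (`|_ - _| < _).
    by apply: eq_bigr => i _; rewrite (gext_E _ (ipre _ (mF i))).
  have faithX : forall A, M A -> A `<=` G ->
      (forall c, M c -> c `<=` A -> lamX c = 0) -> N A.
    move=> A mA AG hA.
    have := faith (exist _ (pre A) (ipre _ mA)).
    rewrite /induced_N /= img_pre => h.
    have : N (A `&` G).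
      apply: h => a aA.
      set c := (@proj1_sig X G) @` proj1_sig a.
      have mc : M c := proj2_sig a.
      have cA : c `<=` A by move=> t [u /aA /= Au <-].
      have := hA c mc cA; rewrite /lamX.
      have -> : pre c = proj1_sig a.
        apply/seteqP; split => u /=.
          by case=> v va /sub_val_inj <-.
        by move=> ua; exists u.
      by rewrite (gext_E _ (proj2_sig a)); case: a {aA c mc cA} => ? ? /=.
    by move=> h1; apply: Nsub h1 _ => t At; split => //; apply: AG.
  have [rhoL [rl0 rladd rlinv rlbound _]] := rho_exists hlamX.
  have [w' [mw' Iw' iw' hw']] := exhaust rl0 rladd rlinv dI mG.
  set W' := \bigcup_n w' n; have mW' : M W' := MU mw'.
  have mGW := MD mG mW'.
  have nGW : N (G `\` W').
    have : forall x, I x -> le x (cl (~` (G `\` W'))).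
      move=> x Ix; apply/(le_clr _ (MC mGW)).
      have mx := rep_M x.
      have h0 := hw' x Ix.
      have : N ((G `\` W') `&` rep x).
        apply: faithX; [exact: MI|by move=> t [[]]|].
        move=> c mc cA; have := rlbound c _ mc (MI mGW mx) cA.
        by rewrite h0 normr_le0 => /eqP.
      by move=> h1; apply: Nsub h1 _; ssolve.
    move=> /supL /(le_clr _ (MC mGW)) h.
    apply: Nsub h _ => t [Gt nW]; split; last by move=> [].
    by case: (m'r t Gt).
  apply: nz' => -[c mc] /= aG.
  have <- : m c = mu (exist _ c mc) by rewrite /m (ext_E _ mc).
  have mcW := MI mc mW'.
  rewrite (fm_inv hm mc mcW); last first.
    by apply: Nsub nGW _ => t [[ct nt]|[[]]] //; split => //; [apply: aG|move=> h; apply: nt; split].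
  have ecW : c `&` W' = \bigcup_n (c `&` w' n).
    apply/seteqP; split => t /=.
      by case=> ct [n _ wt]; exists n.
    by case=> n _ [ct wt]; split => //; exists n.
  have zero : forall n, m (c `&` w' n) = 0.
    move=> n; set x := cl (w' n).
    have mx := rep_M x; have mcw := MI mc (mw' n).
    rewrite (fm_inv hm mcw (MI mcw mx)); last first.
      apply: Nsub (rep_cl (mw' n)) _; rewrite -/x; ssolve.
    have sub1 : c `&` w' n `&` rep x `<=` (S `\` W) `&` rep x.
      by move=> t [[ct wt] xt]; split => //; apply: m'r; apply: aG.
    have hb := rbound _ _ (MI mcw mx) (MI mr mx) sub1.
    rewrite hw in hb; last exact: Iw'.
    by apply/eqP; rewrite -normr_le0; exact: hb.
  rewrite ecW; apply: small0 => e1 e10.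
  have icw : forall n, c `&` w' n `<=` c `&` w' n.+1.
    by move=> n t [ct wt]; split => //; apply: iw'.
  have [n0 hn0] := fm_incr hm (fun n => MI mc (mw' n)) icw e10.
  by have := hn0 n0 (leqnn _); rewrite zero sub0r normrN.
have rr : rho r = 0 := rvan r mr claim.
have [n0 hn0] := rincr w mw iw _ e0'.
exists (cl (w n0)); split; first exact: Iw.
move=> x Ix lx.
have ls : le x s := supU x Ix.
set X1 := rep x; have mX1 : M X1 := rep_M x.
have n1 : N (X1 `\` S) by apply/le_iff.
have n2 : N (w n0 `\` X1) by apply/(le_cll _ (mw n0)).
set c := S `\` (X1 `|` w n0).
have mc : M c by apply: MD => //; apply: MU2.
have e1 : m X1 = m (X1 `&` S).
  by apply: (fm_inv hm mX1 (MI mX1 mS)); apply: Nsub n1 _; ssolve.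
have e2 : m S = m (S `&` X1) + m (S `\` X1) := fm_split hm mS mX1.
have e3 : m (S `\` X1) = m c.
  apply: (fm_inv hm (MD mS mX1) mc); apply: Nsub n2 _; rewrite /c; ssolve.
have -> : m X1 - m S = - m c by rewrite e1 e2 e3 setIC opprD addrA subrr add0r.
rewrite normrN.
have mSw := MD mS (mw n0).
have wW : w n0 `<=` W by move=> t h; exists n0.
have b1 := rbound c (S `\` w n0) mc mSw (fun t => ltac:(rewrite /c /=; tauto)).
apply: le_lt_trans b1 _; rewrite ee ltcR.
have mWw := MD mW (mw n0).
have : rho (S `\` w n0) <= rho r + rho (W `\` w n0).
  apply: le_trans _ (rsub r0 radd mr mWw).

  have := @rmono rho r0 radd _ _ mSw (MU2 mr mWw). apply.
  move=> t [St nw]; case: (pselect (W t)) => Wt; [by right|by left].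
rewrite rr add0r (rdiff radd mW (mw n0) wW).
have := hn0 n0 (leqnn _); lra.
Qed.
End Main.

Theorem mainTheorem14 (X : Type) (R : realType) (M N : set (set X)) :
  localizable R M N ->
  [/\ (forall nu : MN M N -> R[i], continuous_valuation nu ->
         finite_measure M N (nu \o qmap M N) /\ essential R M N (nu \o qmap M N)),
      (forall nu1 nu2 : MN M N -> R[i], continuous_valuation nu1 -> continuous_valuation nu2 ->
         nu1 \o qmap M N = nu2 \o qmap M N -> nu1 = nu2) &
      (forall mu : Msub M -> R[i], finite_measure M N mu -> essential R M N mu ->
         exists2 nu : MN M N -> R[i], continuous_valuation nu & nu \o qmap M N = mu)].
Proof.
move=> hloc; have HE : enhanced M N by case: hloc.

split.
- move=> nu hnu; split.
    exact (part1_fm HE hnu).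
  exact (part1_ess HE hloc hnu).
- move=> nu1 nu2 _ _ h; apply: funext => x.
  rewrite -(cl_rep HE x).
  have := congr1 (fun f => f (exist _ (rep x) (rep_M x))) h.
  by rewrite /= (qmap_cl HE).
- move=> mu hmu hess; exists (fun Z => ext mu (rep Z)).
    split; [exact: part3_val | exact: part3_cont].
  exact: part3_comp.
Qed.
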